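(* Let $R$ be an idempotent semiring and let $A,B$ be irreducible $R$-algebras such that the structure maps $R\to A$ and $R\to B$ have trivial kernel (the preimage of $0$ is $\{0\}$; this is automatic if $R$ is a semifield). Then $A\otimes_RB$ is irreducible.
   Context: Semirings are commutative with $1\neq0$; idempotent means $a+a=a$ for all $a$. A semiring is irreducible if whenever $xy$ is nilpotent, $x$ or $y$ is nilpotent. $A\otimes_RB$ is the tensor product of $R$-algebras (the coproduct in the category of $R$-algebras). *)

(* Defs.v *)
From HB Require Import structures.
From mathcomp Require Import all_boot all_algebra.
Set Implicit Arguments. Unset Strict Implicit. Unset Printing Implicit Defensive.
Import GRing.Theory.
Local Open Scope ring_scope.

Definition idempotent_semiring (R : pzSemiRingType) : Prop :=
  forall a : R, a + a = a.

Definition nilp (S : pzSemiRingType) (x : S) : Prop :=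
  exists n : nat, x ^+ n = 0.

Definition irreducible_semiring (S : comPzSemiRingType) : Prop :=
  forall x y : S, nilp (x * y) -> nilp x \/ nilp y.

Definition trivial_kernel (R S : pzSemiRingType) (f : {rmorphism R -> S}) : Prop :=
  forall r : R, f r = 0 -> r = 0.

(* (C, fC, iA, iB) is a tensor product A (x)_R B, i.e. a coproduct of the
   R-algebras (A, fA) and (B, fB) in the category of commutative R-algebras
   (commutative semirings, possibly trivial, under R). *)
Definition is_tensor_product (R A B C : comPzSemiRingType)
  (fA : {rmorphism R -> A}) (fB : {rmorphism R -> B}) (fC : {rmorphism R -> C})
  (iA : {rmorphism A -> C}) (iB : {rmorphism B -> C}) : Prop :=
  (forall r, iA (fA r) = fC r) /\ (forall r, iB (fB r) = fC r) /\
  forall (D : comPzSemiRingType) (fD : {rmorphism R -> D})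
         (gA : {rmorphism A -> D}) (gB : {rmorphism B -> D}),
    (forall r, gA (fA r) = fD r) -> (forall r, gB (fB r) = fD r) ->
    (exists h : {rmorphism C -> D},
        (forall a, h (iA a) = gA a) /\ (forall b, h (iB b) = gB b)
        /\ (forall r, h (fC r) = fD r)) /\
    (forall h h' : {rmorphism C -> D},
        (forall a, h (iA a) = gA a) -> (forall b, h (iB b) = gB b) ->
        (forall a, h' (iA a) = gA a) -> (forall b, h' (iB b) = gB b) ->
        forall c, h c = h' c).

(* Main.v *)
From Pilot Require Import Defs.
From HB Require Import structures.
From mathcomp Require Import all_boot all_algebra.
From Stdlib Require Import ClassicalEpsilon.
Import Pilot.Defs.
Set Implicit Arguments. Unset Strict Implicit. Unset Printing Implicit Defensive.
Import GRing.Theory.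
Local Open Scope ring_scope.

Definition pb (P : Prop) : bool := if excluded_middle_informative P then true else false.
Lemma pbP (P : Prop) : reflect P (pb P).
Proof. rewrite /pb; case: excluded_middle_informative => h; constructor => //. Qed.

Definition bsr : Type := bool.
HB.instance Definition _ := Choice.on bsr.
HB.instance Definition _ := GRing.isNmodule.Build bsr
  (orbA : associative (orb : bsr -> bsr -> bsr)) orbC orFb.
Lemma bsr_mulDl : left_distributive (andb : bsr -> bsr -> bsr) (+%R).
Proof. by case; case; case. Qed.
HB.instance Definition _ := GRing.Nmodule_isComPzSemiRing.Build bsr
  (andbA : associative (andb : bsr -> bsr -> bsr)) andbC andTb bsr_mulDl andFb.

Lemma bsr0 : (0 : bsr) = false. Proof. by []. Qed.
Lemma bsr1 : (1 : bsr) = true. Proof. by []. Qed.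
Lemma bsrD (x y : bsr) : x + y = x || y. Proof. by []. Qed.
Lemma bsrM (x y : bsr) : x * y = x && y. Proof. by []. Qed.
Section Nil.
Variable S : comPzSemiRingType.
Hypothesis idem : forall x : S, x + x = x.

Lemma nil0 : nilp (0 : S). Proof. by exists 1%N; rewrite expr1. Qed.
Lemma nilM (x y : S) : nilp x -> nilp (x * y).
Proof. by case=> n hn; exists n; rewrite exprMn hn mul0r. Qed.
Lemma nilD (x y : S) : nilp x -> nilp y -> nilp (x + y).
Proof.
case=> m hm [n hn]; exists (m + n)%N; rewrite exprDn big1 // => [[i /=]] hi _.
case: (ltnP i n) => h.
  have -> : (m + n - i = m + (n - i))%N by rewrite addnBA // ltnW.
  by rewrite exprD hm !mul0r mul0rn.
by rewrite -(subnKC h) exprD hn mul0r mulr0 mul0rn.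
Qed.
Lemma le_pow (x y : S) n : x ^+ n + (x + y) ^+ n = (x + y) ^+ n.
Proof.
elim: n => [|n IH]; first by rewrite !expr0 idem.
have -> : (x + y) ^+ n.+1 = (x + y) * (x ^+ n + (x + y) ^+ n) by rewrite IH exprS.
by rewrite exprS !mulrDr !mulrDl !addrA idem.
Qed.
Lemma nilDl (x y : S) : nilp (x + y) -> nilp x.
Proof. by case=> n hn; exists n; have := le_pow x y n; rewrite hn addr0. Qed.
Lemma nil_morph (T : comPzSemiRingType) (f : {rmorphism S -> T}) x :
  nilp x -> nilp (f x).
Proof. by case=> n hn; exists n; rewrite -rmorphXn hn rmorph0. Qed.
End Nil.

Lemma idem_of (R S : comPzSemiRingType) (f : {rmorphism R -> S}) :
  idempotent_semiring R -> forall x : S, x + x = x.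
Proof.
move=> hR x; rewrite -{1 2 3}(mulr1 x) -mulrDr -(rmorph1 f) -rmorphD hR.
by rewrite rmorph1 mulr1.
Qed.

Definition phi (S : comNzSemiRingType) (idem : forall x : S, x + x = x)
  (irr : irreducible_semiring S) (x : S) : bsr := ~~ pb (nilp x).

Section Phi.
Variable S : comNzSemiRingType.
Variable idem : forall x : S, x + x = x.
Variable irr : irreducible_semiring S.
Lemma phi_nmod : nmod_morphism (phi idem irr).
Proof.
split; first by rewrite /phi; case: pbP => // -[]; exact: nil0.
move=> x y; rewrite /phi bsrD.
case: pbP => [h|h]; case: pbP => [hx|hx]; case: pbP => [hy|hy] //=.
all: first [ by case: hx; exact: (nilDl idem h)
  | by case: hy; rewrite addrC in h; exact: (nilDl idem h)
  | by case: h; exact: nilD ].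
Qed.
HB.instance Definition _ := GRing.isNmodMorphism.Build S bsr (phi idem irr) phi_nmod.
Lemma phi_mon : monoid_morphism (phi idem irr).
Proof.
split.
  rewrite /phi; case: pbP => //= -[n]; rewrite expr1n => /eqP.
  by rewrite oner_eq0.
move=> x y; rewrite /phi bsrM.
case: pbP => [h|h]; case: pbP => [hx|hx]; case: pbP => [hy|hy] //=.
all: first [ by case: (irr h)
  | by case: h; exact: nilM
  | by case: h; rewrite mulrC; exact: nilM ].
Qed.
HB.instance Definition _ := GRing.isMonoidMorphism.Build S bsr (phi idem irr) phi_mon.
Lemma phiP x : phi idem irr x = false <-> nilp x.
Proof. by rewrite /phi; case: pbP => h; split. Qed.
End Phi.

Section Gen.
Variables (A B C : comPzSemiRingType).
Variables (iA : {rmorphism A -> C}) (iB : {rmorphism B -> C}).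

Definition Gen (c : C) : Prop := forall P : C -> Prop, P 0 ->
  (forall x y, P x -> P y -> P (x + y)) -> (forall a b, P (iA a * iB b)) -> P c.

Lemma Gen0 : Gen 0. Proof. by move=> P. Qed.
Lemma GenD x y : Gen x -> Gen y -> Gen (x + y).
Proof. move=> gx gy P P0 PD PG; exact: (PD _ _ (gx P P0 PD PG) (gy P P0 PD PG)). Qed.
Lemma GenG a b : Gen (iA a * iB b). Proof. by move=> P P0 PD PG. Qed.
Lemma GenM x y : Gen x -> Gen y -> Gen (x * y).
Proof.
move=> gx gy; apply: (gx (fun x => Gen (x * y))).
- by rewrite mul0r; exact: Gen0.
- by move=> x1 x2 h1 h2; rewrite mulrDl; exact: GenD.
move=> a b; apply: (gy (fun y => Gen (iA a * iB b * y))).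
- by rewrite mulr0; exact: Gen0.
- by move=> y1 y2 h1 h2; rewrite mulrDr; exact: GenD.
by move=> c d; rewrite mulrACA -!rmorphM; exact: GenG.
Qed.
Lemma Gen1 : Gen 1. Proof. by rewrite -(mulr1 1) -{1}(rmorph1 iA) -(rmorph1 iB); exact: GenG. Qed.
Lemma GenA a : Gen (iA a). Proof. by rewrite -(mulr1 (iA a)) -(rmorph1 iB); exact: GenG. Qed.
Lemma GenB b : Gen (iB b). Proof. by rewrite -(mul1r (iB b)) -(rmorph1 iA); exact: GenG. Qed.

Definition genb c := pb (Gen c).
Definition D := {c : C | genb c}.
Lemma toG c : Gen c -> genb c. Proof. by move=> h; apply/pbP. Qed.
Lemma ofG c : genb c -> Gen c. Proof. by move/pbP. Qed.

HB.instance Definition _ := Choice.on D.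
Definition D0 : D := exist _ 0 (toG Gen0).
Definition Dadd (x y : D) : D :=
  exist _ (sval x + sval y) (toG (GenD (ofG (proj2_sig x)) (ofG (proj2_sig y)))).
Definition D1 : D := exist _ 1 (toG Gen1).
Definition Dmul (x y : D) : D :=
  exist _ (sval x * sval y) (toG (GenM (ofG (proj2_sig x)) (ofG (proj2_sig y)))).
Lemma Dinj (x y : D) : sval x = sval y -> x = y.
Proof. exact: val_inj. Qed.
Lemma DaddA : associative Dadd. Proof. by move=> x y z; apply: Dinj; rewrite /= addrA. Qed.
Lemma DaddC : commutative Dadd. Proof. by move=> x y; apply: Dinj; rewrite /= addrC. Qed.
Lemma Dadd0 : left_id D0 Dadd. Proof. by move=> x; apply: Dinj; rewrite /= add0r. Qed.
HB.instance Definition _ := GRing.isNmodule.Build D DaddA DaddC Dadd0.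
Lemma DmulA : associative Dmul. Proof. by move=> x y z; apply: Dinj; rewrite /= mulrA. Qed.
Lemma DmulC : commutative Dmul. Proof. by move=> x y; apply: Dinj; rewrite /= mulrC. Qed.
Lemma Dmul1 : left_id D1 Dmul. Proof. by move=> x; apply: Dinj; rewrite /= mul1r. Qed.
Lemma DmulDl : left_distributive Dmul Dadd.
Proof. by move=> x y z; apply: Dinj; rewrite /= mulrDl. Qed.
Lemma Dmul0 : left_zero D0 Dmul. Proof. by move=> x; apply: Dinj; rewrite /= mul0r. Qed.
HB.instance Definition _ := GRing.Nmodule_isComPzSemiRing.Build D
  DmulA DmulC Dmul1 DmulDl Dmul0.

Definition vD (x : D) : C := sval x.
Lemma vD_nmod : nmod_morphism vD. Proof. by []. Qed.
HB.instance Definition _ := GRing.isNmodMorphism.Build D C vD vD_nmod.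
Lemma vD_mon : monoid_morphism vD. Proof. by []. Qed.
HB.instance Definition _ := GRing.isMonoidMorphism.Build D C vD vD_mon.

Definition gAf (a : A) : D := exist _ (iA a) (toG (GenA a)).
Lemma gA_nmod : nmod_morphism gAf.
Proof. by split; [apply: Dinj; rewrite /= rmorph0 | move=> x y; apply: Dinj; rewrite /= rmorphD]. Qed.
HB.instance Definition _ := GRing.isNmodMorphism.Build A D gAf gA_nmod.
Lemma gA_mon : monoid_morphism gAf.
Proof. by split; [apply: Dinj; rewrite /= rmorph1 | move=> x y; apply: Dinj; rewrite /= rmorphM]. Qed.
HB.instance Definition _ := GRing.isMonoidMorphism.Build A D gAf gA_mon.

Definition gBf (b : B) : D := exist _ (iB b) (toG (GenB b)).
Lemma gB_nmod : nmod_morphism gBf.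
Proof. by split; [apply: Dinj; rewrite /= rmorph0 | move=> x y; apply: Dinj; rewrite /= rmorphD]. Qed.
HB.instance Definition _ := GRing.isNmodMorphism.Build B D gBf gB_nmod.
Lemma gB_mon : monoid_morphism gBf.
Proof. by split; [apply: Dinj; rewrite /= rmorph1 | move=> x y; apply: Dinj; rewrite /= rmorphM]. Qed.
HB.instance Definition _ := GRing.isMonoidMorphism.Build B D gBf gB_mon.

Definition kf (h : {rmorphism C -> D}) (c : C) : C := vD (h c).
Lemma kf_nmod h : nmod_morphism (kf h).
Proof. by split; [rewrite /kf rmorph0 | move=> x y; rewrite /kf rmorphD]. Qed.
HB.instance Definition _ h := GRing.isNmodMorphism.Build C C (kf h) (kf_nmod h).
Lemma kf_mon h : monoid_morphism (kf h).
Proof. by split; [rewrite /kf rmorph1 | move=> x y; rewrite /kf rmorphM]. Qed.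
HB.instance Definition _ h := GRing.isMonoidMorphism.Build C C (kf h) (kf_mon h).
End Gen.

Lemma gen_all (R A B : comNzSemiRingType)
  (fA : {rmorphism R -> A}) (fB : {rmorphism R -> B})
  (C : comPzSemiRingType) (fC : {rmorphism R -> C})
  (iA : {rmorphism A -> C}) (iB : {rmorphism B -> C}) :
  is_tensor_product fA fB fC iA iB -> forall c, Gen iA iB c.
Proof.
move=> [hA [hB U]] c.
have eB : forall r, gBf iA iB (fB r) = (gAf iA iB \o fA) r.
  by move=> r; apply: Dinj; rewrite /= hA hB.
have [[h [h1 [h2 _]]] _] := U (D iA iB) (gAf iA iB \o fA) (gAf iA iB) (gBf iA iB)
  (fun r => erefl) eB.
have [_ uq] := U C fC iA iB hA hB.
have e := uq (kf h) idfun.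
rewrite -[c]/(idfun c) -e.
- exact: (ofG (proj2_sig (h c))).
- by move=> a /=; rewrite /kf /= h1.
- by move=> b /=; rewrite /kf /= h2.
- by [].
- by [].
Qed.

Lemma bsr_nil (u : bsr) : nilp u -> u = false.
Proof. by case: u => // -[n]; rewrite -bsr1 expr1n. Qed.

Theorem proposition5p10 (R A B : comNzSemiRingType)
  (fA : {rmorphism R -> A}) (fB : {rmorphism R -> B})
  (C : comPzSemiRingType) (fC : {rmorphism R -> C})
  (iA : {rmorphism A -> C}) (iB : {rmorphism B -> C}) :
  idempotent_semiring R ->
  irreducible_semiring A -> irreducible_semiring B ->
  trivial_kernel fA -> trivial_kernel fB ->
  is_tensor_product fA fB fC iA iB ->
  irreducible_semiring C.
Proof.
move=> hR irrA irrB kA kB tens.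
have idA := idem_of fA hR; have idB := idem_of fB hR; have idC := idem_of fC hR.
have genC := gen_all tens.
have nilAB : forall r, nilp (fA r) <-> nilp (fB r).
  move=> r; split=> -[n hn]; exists n; move: hn; rewrite -!rmorphXn.
    by move/kA => ->; rewrite rmorph0.
  by move/kB => ->; rewrite rmorph0.
pose pA := phi idA irrA; pose pB := phi idB irrB.
have eB : forall r, pB (fB r) = (pA \o fA) r.
  move=> r /=; rewrite /pB /pA /phi; congr (~~ _).
  by case: pbP => h1; case: pbP => h2 //; exfalso; [apply: h2 | apply: h1]; apply/nilAB.
have [hA [hB U]] := tens.
have [[h [h1 [h2 _]]] _] := U bsr (pA \o fA) pA pB (fun r => erefl) eB.
have keyAB : forall a b, nilp (iA a * iB b) -> nilp a \/ nilp b.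
  move=> a b /(nil_morph h) /bsr_nil; rewrite rmorphM bsrM h1 h2.
  case/nandP => /negbTE e; [left; exact/(phiP idA irrA) | right; exact/(phiP idB irrB)].
have Rg : forall a b, ~ nilp a -> ~ nilp b ->
    forall y, nilp (iA a * iB b * y) -> nilp y.
  move=> a b na nb y; apply: (genC y (fun y => nilp (iA a * iB b * y) -> nilp y)).
  - by move=> _; exact: nil0.
  - move=> y1 y2 H1 H2; rewrite mulrDr => hn; apply: nilD.
      by apply: H1; exact: (nilDl idC hn).
    by apply: H2; rewrite addrC in hn; exact: (nilDl idC hn).
  move=> c d; rewrite mulrACA -!rmorphM => hk.
  case: (keyAB _ _ hk) => hh.
    case: (irrA _ _ hh) => // hc; exact: nilM (nil_morph iA hc).
  case: (irrB _ _ hh) => // hd; rewrite mulrC; exact: nilM (nil_morph iB hd).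
have Q : forall x : C, nilp x \/ forall y, nilp (x * y) -> nilp y.
  move=> x; pose P := fun x : C => nilp x \/ forall y, nilp (x * y) -> nilp y.
  suff : P x by [].
  apply: (genC x P); rewrite /P.
  - by left; exact: nil0.
  - move=> x1 x2 [n1|H1] [n2|H2].
    + by left; exact: nilD.
    + right=> y; rewrite mulrDl addrC => hn; apply: H2; exact: (nilDl idC hn).
    + right=> y; rewrite mulrDl => hn; apply: H1; exact: (nilDl idC hn).
    + right=> y; rewrite mulrDl => hn; apply: H1; exact: (nilDl idC hn).
  move=> a b; case: (pbP (nilp a)) => [na|na].
    by left; exact: nilM (nil_morph iA na).
  case: (pbP (nilp b)) => [nb|nb].
    by left; rewrite mulrC; exact: nilM (nil_morph iB nb).
  by right; exact: Rg.
move=> x y hxy; case: (Q x) => [hx|H]; [by left | by right; apply: H].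
Qed.
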